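(* For every preference profile $p\in\mathcal P$, $M(p)=D_{\mu(p)}(p)$.
   Context: Let $n,h\ge2$, $N=\{1,\dots,n\}$ the alternatives, $H=\{1,\dots,h\}$ the individuals. A preference profile is an $h$-tuple $p=(p_1,\dots,p_h)$ of linear orders on $N$; $\mathcal P$ is the set of profiles; $x>_{p_i}y$ means $x\ne y$ and $x$ is ranked above $y$ by $p_i$. The Minimax SCC is $M(p)=\mathrm{argmin}_{x\in N}\max_{y\in N\setminus\{x\}}|\{i\in H: y>_{p_i}x\}|$. A majority threshold is an integer $\mu$ with $h/2<\mu\le h$. For such $\mu$, $D_\mu(p)=\{x\in N:\ \forall y\in N,\ |\{i\in H: y>_{p_i}x\}|<\mu\}$. Define $\mu(p)=\min\{\mu\in\mathbb N\cap(h/2,h]: D_\mu(p)\neq\varnothing\}$ (this set of thresholds is nonempty). *)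

(* Defs.v *)
From mathcomp Require Import all_boot all_order all_fingroup.
Set Implicit Arguments. Unset Strict Implicit. Unset Printing Implicit Defensive.

(* Alternatives N = 'I_n (0-based), individuals H = 'I_h.
   A linear order on 'I_n is represented by a permutation r : {perm 'I_n}
   giving the rank (position) of each alternative: x is ranked above y
   iff r x < r y. This is a bijection between permutations and linear orders. *)
Definition linord (n : nat) := {perm 'I_n}.
Definition profile (n h : nat) := {ffun 'I_h -> linord n}.

Definition above n (o : linord n) (x y : 'I_n) : bool := (o x < o y)%N.

Definition nbeat n h (p : profile n h) (y x : 'I_n) : nat :=
  #|[set i : 'I_h | above (p i) y x]|.

Definition maxdef n h (p : profile n h) (x : 'I_n) : nat :=
  \max_(y | y != x) nbeat p y x.

Definition minimax n h (p : profile n h) : {set 'I_n} :=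
  [set x | [forall z, maxdef p x <= maxdef p z]].

Definition is_threshold (h mu : nat) : bool := (h < 2 * mu)%N && (mu <= h)%N.

Definition Dmu n h (mu : nat) (p : profile n h) : {set 'I_n} :=
  [set x | [forall y, nbeat p y x < mu]].

(* mu(p): least threshold with D_mu(p) nonempty (default h.+1 if none;
   the set of such thresholds is nonempty, so the default is never used). *)
Definition mu_p n h (p : profile n h) : nat :=
  \big[minn/h.+1]_(m < h.+1 | is_threshold h m && (Dmu m p != set0)) (m : nat).

(* Main.v *)
Require Import Defs.
From mathcomp Require Import all_boot all_order all_fingroup.
From mathcomp Require Import zify.

Lemma eq_sym_neq (T : eqType) (a b : T) : a != b -> b != a.
Proof. by rewrite eq_sym. Qed.

Lemma bigmin_le (I : eqType) (r : seq I) (P : pred I) (F : I -> nat) idx i :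
  i \in r -> P i -> (\big[minn/idx]_(j <- r | P j) F j <= F i)%N.
Proof.
elim: r => // a r IH; rewrite inE big_cons => /orP[/eqP <- -> | ir Pi].
  exact: geq_minl.
case: (P a); last exact: IH.
exact: leq_trans (geq_minr _ _) (IH ir Pi).
Qed.

Section S.
Variables (n h : nat) (p : profile n h).

Lemma nbeat_refl x : nbeat p x x = 0.
Proof.
rewrite /nbeat; apply/eqP; rewrite cards_eq0; apply/eqP/setP=> i.
by rewrite !inE /above ltnn.
Qed.

Lemma nbeat_le y x : (nbeat p y x <= h)%N.
Proof. by rewrite /nbeat; apply: leq_trans (max_card _) _; rewrite card_ord. Qed.

Lemma nbeat_compl x w : x != w -> nbeat p x w + nbeat p w x = h.
Proof.
move=> xw; rewrite /nbeat; have := cardsC [set i | above (p i) x w]; rewrite card_ord => E; rewrite -[in RHS]E.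
congr (_ + _); apply: eq_card => i; rewrite !inE /above -leqNgt ltn_neqAle.
suff -> : (p i w : nat) != p i x by [].
apply: contra xw => /eqP/val_inj/perm_inj ->; by [].
Qed.

Lemma le_maxdef y x : y != x -> (nbeat p y x <= maxdef p x)%N.
Proof. by move=> yx; apply: (leq_bigmax_cond (P := fun y => y != x)). Qed.

Lemma maxdef_le x : (maxdef p x <= h)%N.
Proof. by apply/bigmax_leqP => y _; apply: nbeat_le. Qed.

Lemma Dmu_E m x : (0 < m)%N -> (x \in Dmu m p) = (maxdef p x < m)%N.
Proof.
move=> m0; rewrite inE -(prednK m0) ltnS /maxdef; apply/idP/idP.
  by move/forallP=> H; apply/bigmax_leqP => y _; rewrite -ltnS; exact: H.
move/bigmax_leqP=> H; apply/forallP.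
move=> y; case: (eqVneq y x) => [->|yx]; first by rewrite nbeat_refl.
by rewrite ltnS H.
Qed.

Lemma mu_le m : (m <= h)%N -> is_threshold h m -> Dmu m p != set0 -> (mu_p p <= m)%N.
Proof.
move=> mh t d; have mh' : (m < h.+1)%N by [].
rewrite /mu_p; apply: (@bigmin_le _ _ _ _ _ (Ordinal mh')) => //=; last by rewrite t d.
exact: mem_index_enum.
Qed.

Lemma mu_prop : (exists m, [/\ (m <= h)%N, is_threshold h m & Dmu m p != set0]) ->
  is_threshold h (mu_p p) && (Dmu (mu_p p) p != set0).
Proof.
move=> [m [mh t d]].
have : mu_p p = h.+1 \/ (is_threshold h (mu_p p) && (Dmu (mu_p p) p != set0)).
  rewrite /mu_p; apply: (big_ind (fun x => x = h.+1 \/ (is_threshold h x && (Dmu x p != set0)))); [by left | | by move=> i Hi; right].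
  by move=> a b Ha Hb; rewrite /minn; case: ltnP.
case=> // E; have := @mu_le m mh t d; rewrite E; lia.
Qed.

Lemma top_exists : (2 <= n)%N -> (2 <= h)%N -> exists x, (maxdef p x < h)%N.
Proof.
move=> hn hh; have n0 : (0 < n)%N by lia.
have h0 : (0 < h)%N by lia.
set i0 := Ordinal h0.
exists ((p i0)^-1 (Ordinal n0))%g.
apply: (@leq_ltn_trans h.-1); last by lia.
apply/bigmax_leqP => y _; rewrite /nbeat.
have -> : h.-1 = #|[set~ i0]| by rewrite cardsC1 card_ord.
apply: subset_leq_card; apply/subsetP => i; rewrite !inE /above.
by apply: contraTN => /eqP ->; rewrite permKV -leqNgt.
Qed.

End S.

Theorem proposition1 (n h : nat) (hn : (2 <= n)%N) (hh : (2 <= h)%N)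
  (p : profile n h) :
  minimax p = Dmu (mu_p p) p.
Proof.
have [x0 Hx0] := @top_exists n h p hn hh.
have HH : exists m, [/\ (m <= h)%N, is_threshold h m & Dmu m p != set0].
  exists h; split => //; first by rewrite /is_threshold; apply/andP; split=> //; lia.
  apply/set0Pn; exists x0; rewrite Dmu_E //; lia.
move: (@mu_prop n h p HH) => /andP[/andP[t1 t2] /set0Pn [z Hz]].
have mu0 : (0 < mu_p p)%N by lia.
rewrite Dmu_E // in Hz.
apply/setP => x; rewrite Dmu_E // inE; apply/forallP/idP.
  by move=> H; exact: leq_ltn_trans (H z) Hz.
move=> Hx w; rewrite leqNgt; apply/negP => Hw.
have [big|small] := ltnP h (2 * maxdef p x).
  have := @mu_le n h p (maxdef p x) (@maxdef_le n h p x).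
  rewrite /is_threshold big maxdef_le /= => H.
  have : (mu_p p <= maxdef p x)%N.
    apply: H => //; apply/set0Pn; exists w; rewrite Dmu_E //; lia.
  lia.
have wx : x != w by apply: contraTneq Hw => ->; rewrite ltnn.
have := @nbeat_compl n h p _ _ wx.
have := @le_maxdef n h p _ _ wx; have := @le_maxdef n h p _ _ (eq_sym_neq _ _ _ wx); lia.
Qed.
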